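(* Let $G$ be a chemical nontrivial cactus on $n$ vertices with $k$ cycles. Then \[R(G)\geq \frac{n}{2}-(k-1)\left(\frac{3}{2}-\sqrt 2\right),\] with equality when no two articulation points of $G$ are adjacent.
   Context: A graph is chemical if every vertex has degree at most $4$. A cactus is a connected graph in which any two cycles share at most one vertex; it is nontrivial if it has no bridges (edges whose removal disconnects the graph). An articulation point is a vertex whose removal disconnects the graph. The Randi\'c index is $R(G)=\sum_{uv\in E(G)}\frac{1}{\sqrt{d_ud_v}}$, where $d_v$ is the degree of $v$. *)

(* Defs.v *)
(* Simple graphs: a symmetric irreflexive relation e on a finType T. *)
From HB Require Import structures.
From mathcomp Require Import all_boot all_order all_algebra.
Set Implicit Arguments. Unset Strict Implicit. Unset Printing Implicit Defensive.
Import Order.TTheory GRing.Theory Num.Theory.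

Section Graph.
Variables (T : finType) (e : rel T).

Definition deg (x : T) : nat := #|[set y | e x y]|.

Definition chemical : Prop := forall x, deg x <= 4.

Definition connected_rel (r : rel T) : bool := [forall u, [forall v, connect r u v]].
Definition connected_graph : bool := connected_rel e.

Definition cycle_edges (s : seq T) : {set {set T}} :=
  [set [set x; next s x] | x in [set y in s]].

Definition is_cycle (E : {set {set T}}) : bool :=
  [exists m : 'I_#|T|.+1, exists t : m.-tuple T,
     [&& uniq t, 3 <= m, cycle e t & E == cycle_edges t]].

Definition cycles : {set {set {set T}}} := [set E | is_cycle E].

Definition cycle_vertices (E : {set {set T}}) : {set T} := \bigcup_(f in E) f.

Definition cactus : Prop :=
  connected_graph /\
  forall C1 C2, C1 \in cycles -> C2 \in cycles -> C1 != C2 ->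
    #|cycle_vertices C1 :&: cycle_vertices C2| <= 1.

Definition bridge (x y : T) : bool :=
  e x y && ~~ connected_rel (fun a b => e a b && ([set a; b] != [set x; y])).

(* nontrivial: no bridges *)
Definition no_bridges : Prop := forall x y, ~~ bridge x y.

Definition articulation (v : T) : bool :=
  ~~ [forall u, [forall w, (u != v) ==> (w != v) ==>
        connect (fun a b => [&& e a b, a != v & b != v]) u w]].

(* Randic index: sum over (unordered) edges uv of 1/sqrt(d_u d_v);
   each edge is counted twice in the ordered double sum, hence the 1/2. *)
Definition randic (R : rcfType) : R :=
  (\sum_(u : T) \sum_(v : T | e u v)
      (Num.sqrt ((deg u)%:R * (deg v)%:R))^-1) / 2%:R.

End Graph.

(* Main.v *)
Require Import Defs.
From HB Require Import structures.
From mathcomp Require Import all_boot all_order all_algebra.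
From mathcomp Require Import zify.
Set Implicit Arguments. Unset Strict Implicit. Unset Printing Implicit Defensive.

Section Gen.
Variable T : finType.

Lemma set2_eq (a b c d : T) : [set a; b] = [set c; d] ->
  (a = c /\ b = d) \/ (a = d /\ b = c).
Proof.
move=> H.
have ha : a \in [set c; d] by rewrite -H set21.
have hb : b \in [set c; d] by rewrite -H set22.
have hc : c \in [set a; b] by rewrite H set21.
have hd : d \in [set a; b] by rewrite H set22.
move: ha hb hc hd; rewrite !in_set2.
by case/orP=> /eqP-> ; case/orP=> /eqP->; case/orP=> /eqP ?; case/orP=> /eqP ?;
  subst; auto.
Qed.

Lemma next_next_neq (t : seq T) x : uniq t -> 2 < size t -> x \in t ->
  next t (next t x) != x.
Proof.
move=> Ut st xt; case: (rot_to xt) => i s hrot.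
rewrite -!(next_rot i Ut) hrot.
have : uniq (x :: s) by rewrite -hrot rot_uniq.
have : 2 < size (x :: s) by rewrite -hrot size_rot.
case: s {hrot} => [|s0 [|s1 r]] //= _.
rewrite !inE !negb_or => /andP[/and3P[xs0 xs1 _] /andP[/andP[s0s1 _] _]].
rewrite eqxx; case: ifP => [/eqP hs0|_]; first by rewrite hs0 eqxx in xs0.
by rewrite eqxx eq_sym.
Qed.


Lemma next_last (w : T) p : uniq (w :: p) -> next (w :: p) (last w p) = w.
Proof. by move=> U; rewrite next_nth mem_last index_last // nth_default. Qed.

Lemma mem_cedges (t : seq T) f :
  reflect (exists2 x, x \in t & f = [set x; next t x]) (f \in cycle_edges t).
Proof.
rewrite /cycle_edges; apply: (iffP imsetP) => [[x]|[x]]; rewrite ?inE => xt ->;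
  by exists x; rewrite ?inE.
Qed.

Lemma next_prev_neq (t : seq T) v : uniq t -> 2 < size t -> v \in t ->
  next t v != prev t v.
Proof.
move=> Ut st vt; have pt : prev t v \in t by rewrite mem_prev.
by have := next_next_neq Ut st pt; rewrite next_prev.
Qed.

Lemma nbr_in (t : seq T) v : uniq t -> 2 < size t -> v \in t ->
  [set y | [set v; y] \in cycle_edges t] = [set next t v; prev t v].
Proof.
move=> Ut st vt; apply/setP => y; rewrite !inE; apply/mem_cedges/orP.
  case=> x xt /set2_eq [[-> ->]|[-> ->]]; first by left.
  by right; rewrite prev_next.
case=> /eqP ->; first by exists v.
exists (prev t v); first by rewrite mem_prev.
by rewrite next_prev // setUC.
Qed.

Lemma nbr_notin (t : seq T) v : v \notin t ->
  [set y | [set v; y] \in cycle_edges t] = set0.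
Proof.
move=> vt; apply/setP => y; rewrite !inE; apply/negP => /mem_cedges [x xt h].
have : v \in [set x; next t x] by rewrite -h set21.
by rewrite in_set2 => /orP[] /eqP hv; move: vt; rewrite hv ?mem_next xt.
Qed.

Lemma card_nbr (t : seq T) v : uniq t -> 2 < size t ->
  #|[set y | [set v; y] \in cycle_edges t]| = if v \in t then 2 else 0.
Proof.
move=> Ut st; case: ifP => vt.
  by rewrite nbr_in // cards2 next_prev_neq.
by rewrite nbr_notin ?vt // cards0.
Qed.

End Gen.

Section Main.
Variables (T : finType) (e : rel T).
Hypotheses (e_sym : symmetric e) (e_irr : irreflexive e).

Lemma cycle_wit C : C \in cycles e ->
  exists t : seq T, [/\ uniq t, 2 < size t, cycle e t & C = cycle_edges t].
Proof.
rewrite inE => /existsP [m /existsP [t /and4P [Ut hm ct /eqP ->]]].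
by exists t; rewrite size_tuple.
Qed.

Lemma cycle_of (t : seq T) : uniq t -> 2 < size t -> cycle e t ->
  cycle_edges t \in cycles e.
Proof.
move=> Ut st ct; rewrite inE; apply/existsP.
have hs : size t < #|T|.+1 by rewrite ltnS -(card_uniqP Ut) max_card.
exists (Ordinal hs); apply/existsP; exists (in_tuple t).
by rewrite /= Ut st ct eqxx.
Qed.

Lemma cedge_rel (s : rel T) (t : seq T) x y : cycle s t ->
  [set x; y] \in cycle_edges t -> s x y \/ s y x.
Proof.
move=> ct /mem_cedges [z zt /set2_eq [[-> ->]|[-> ->]]];
  first [by left; apply: next_cycle | by right; apply: next_cycle].
Qed.

Lemma cedge_e C x y : C \in cycles e -> [set x; y] \in C -> e x y.
Proof.
case/cycle_wit => t [Ut st ct ->] /(cedge_rel ct) [] //.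
by rewrite e_sym.
Qed.

Lemma cedge_any C f : C \in cycles e -> f \in C -> exists x y, f = [set x; y].
Proof.
case/cycle_wit => t [Ut st ct ->] /mem_cedges [z _ ->]; by exists z, (next t z).
Qed.

Lemma mk_cycle (s : rel T) u w : subrel s e -> s u w ->
  connect (fun a b => s a b && ([set a; b] != [set u; w])) w u ->
  exists t : seq T, [/\ uniq t, 2 < size t, cycle s t & [set u; w] \in cycle_edges t].
Proof.
move=> se suw /connectP [p pp hu]; case: (shortenP pp) hu => p' pp' Up' _ hu.
have sp : path s w p' by apply: sub_path pp' => a b /andP[].
exists (w :: p'); split => //.
- case: p' pp' Up' sp hu => [|y [|z q]] //=.
    by move=> _ _ _ hu; move: suw; rewrite hu => /se; rewrite e_irr.
  by move=> /andP[/andP[_ hne] _] _ _ hu; move: hne; rewrite hu setUC eqxx.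
- by rewrite /= rcons_path sp -hu.
- apply/mem_cedges; exists (last w p'); first exact: mem_last.
  by rewrite next_last // hu.
Qed.

Hypothesis hcact : cactus e.

Lemma cycle_unique C D x y : C \in cycles e -> D \in cycles e -> x != y ->
  [set x; y] \in C -> [set x; y] \in D -> C = D.
Proof.
move=> hC hD xy xC xD; apply/eqP; apply: contraT => CD.
have := hcact.2 _ _ hC hD CD.
have sub : [set x; y] \subset cycle_vertices C :&: cycle_vertices D.
  apply/subsetP => z zin; rewrite inE; apply/andP; split;
    by apply/bigcupP; exists [set x; y].
by move/(leq_trans (subset_leq_card sub)); rewrite cards2 xy.
Qed.

End Main.

Section Main2.
Variables (T : finType) (e : rel T).
Hypotheses (e_sym : symmetric e) (e_irr : irreflexive e).
Hypotheses (hcact : cactus e) (hnb : no_bridges e).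

Lemma edge_cycle x y : e x y -> exists2 C, C \in cycles e & [set x; y] \in C.
Proof.
move=> exy; have := hnb x y; rewrite /bridge exy /= negbK => /forallP /(_ y) /forallP /(_ x) hc.
have [t [Ut st ct hin]] := @mk_cycle _ e e_irr e x y (fun _ _ h => h) exy hc.
by exists (cycle_edges t) => //; apply: cycle_of.
Qed.

Lemma deg_sum v : deg e v = \sum_(C in cycles e) #|[set y | [set v; y] \in C]|.
Proof.
transitivity (\sum_y \sum_(C in cycles e) (([set v; y] \in C) : nat)).
  rewrite /deg -sum1_card big_mkcond /=; apply: eq_bigr => y _; rewrite inE.
  case: (boolP (e v y)) => hy.
    have [C0 hC0 hin] := edge_cycle hy.
    rewrite (bigD1 C0) //= hin big1 // => C /andP [hC CC0].
    apply/eqP; rewrite eqb0; apply/negP => hinC.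
    have vy : v != y by apply: contraTneq hy => ->; rewrite e_irr.
    by move: CC0; rewrite (cycle_unique hcact hC hC0 vy hinC hin) eqxx.
  rewrite big1 // => C hC; apply/eqP; rewrite eqb0; apply/negP => hinC.
  by move: hy; rewrite (cedge_e e_sym hC hinC).
rewrite exchange_big /=; apply: eq_bigr => C _.
by rewrite -sum1_card [RHS]big_mkcond /=; apply: eq_bigr => y _; rewrite inE; case: ifP.
Qed.

Lemma deg_even v : ~~ odd (deg e v).
Proof.
rewrite deg_sum; apply: (big_ind (fun m => ~~ odd m)) => //.
  by move=> a b ha hb; rewrite oddD (negbTE ha) (negbTE hb).
move=> C /cycle_wit [t [Ut st _ ->]]; rewrite card_nbr //; by case: ifP.
Qed.

Lemma deg_pos v : 1 < #|T| -> 0 < deg e v.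
Proof.
move=> hT.
have [u uv] : exists u, u != v.
  apply/existsP; apply: contraTT hT; rewrite negb_exists => /forallP hu.
  rewrite -leqNgt; apply/card_le1_eqP => a b _ _.
  by move: (hu a) (hu b); rewrite !negbK => /eqP -> /eqP ->.
have := hcact.1; move=> /forallP /(_ v) /forallP /(_ u) /connectP [p pp hu].
case: p pp hu => [|y p] /=; first by move=> _ hu; rewrite hu eqxx in uv.
move=> /andP [hy _] _; rewrite /deg card_gt0; apply/set0Pn; exists y; by rewrite inE.
Qed.


Lemma deg24 v : chemical e -> 1 < #|T| -> deg e v = 2 \/ deg e v = 4.
Proof.
move=> hch hT; move: (deg_even v) (deg_pos v hT) (hch v).
by case: (deg e v) => [|[|[|[|[|d]]]]] //; auto.
Qed.

Lemma set2_same (x y v a : T) : [set x; y] = [set v; a] -> x = v -> y = a.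
Proof. by move=> /set2_eq [[_ ->]|[-> ->]] // ->. Qed.

Lemma deg4_two v : deg e v = 4 -> exists C1 C2 a b, [/\ C1 \in cycles e, C2 \in cycles e,
  C1 != C2, [set v; a] \in C1 & [set v; b] \in C2].
Proof.
move=> h4.
have : \sum_(C | (C \in cycles e) && ([set y | [set v; y] \in C] != set0)) 2 = 4.
  rewrite big_mkcondr /= -h4 deg_sum; apply: eq_bigr => C /cycle_wit [t [Ut st _ ->]].
  rewrite card_nbr //; case: (boolP (v \in t)) => vt.
    by rewrite nbr_in // -card_gt0 cards2 next_prev_neq.
  by rewrite nbr_notin // eqxx.
rewrite sum_nat_cond_const => h.
have : 1 < #|[set C | (C \in cycles e) && ([set y | [set v; y] \in C] != set0)]|.
  by move: h; case: #|_| => [|[|[|]]].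
case/card_gt1P => C1 [C2 []]; rewrite !inE => /andP [h1 /set0Pn [a ha]] /andP [h2 /set0Pn [b hb]] C12.
by exists C1, C2, a, b; rewrite !inE in ha hb *.
Qed.

Lemma art4 v : deg e v = 4 -> articulation e v.
Proof.
move=> /deg4_two [C1 [C2 [a [b [hC1 hC2 C12 ha hb]]]]].
have eva := cedge_e e_sym hC1 ha; have evb := cedge_e e_sym hC2 hb.
have av : a != v by apply: contraTneq eva => ->; rewrite e_irr.
have bv : b != v by apply: contraTneq evb => ->; rewrite e_irr.
have ab : a != b.
  apply: contraNneq C12 => hab; rewrite eq_sym in av.
  by rewrite (cycle_unique hcact hC1 hC2 av ha) // hab.
apply/negP => /forallP /(_ a) /forallP /(_ b); rewrite av bv /= => hc.
pose s x y := e x y && ((x != v) && (y != v) || ([set x; y] == [set v; a])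
   || ([set x; y] == [set v; b])).
have se : subrel s e by move=> x y /andP[].
have sva : s v a by rewrite /s eva !eqxx.
have hc' : connect (fun x y => s x y && ([set x; y] != [set v; a])) a v.
  apply: (@connect_trans _ _ b).
    apply: connect_sub hc => x y /and3P [exy xv yv]; apply: connect1.
    rewrite /s exy xv yv /=; apply/eqP => /esym hxy.
    have : v \in [set x; y] by rewrite -hxy set21.
    by rewrite in_set2 => /orP [] /eqP hh; [move: xv | move: yv]; rewrite hh eqxx.
  apply: connect1; rewrite /s e_sym evb setUC !eqxx orbT /=.
  by apply/negP => /eqP /set2_same /(_ erefl) hba; move: ab; rewrite hba eqxx.
have [t [Ut st ct hin]] := mk_cycle e_irr se sva hc'.
have hD : cycle_edges t \in cycles e by apply: cycle_of => //; apply: sub_cycle ct.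
have vt : v \in t.
  case/mem_cedges: hin => x xt hx; have : v \in [set x; next t x] by rewrite -hx set21.
  by rewrite in_set2 => /orP [] /eqP ->; rewrite ?mem_next.
have hn : forall y, s v y \/ s y v -> y = a \/ y = b.
  move=> y [] /andP [_]; rewrite eqxx ?andbF /= => /orP [] /eqP hy.
  - by left; apply: set2_same hy _.
  - by right; apply: set2_same hy _.
  - by left; rewrite setUC in hy; apply: set2_same hy _.
  - by right; rewrite setUC in hy; apply: set2_same hy _.
have hN := nbr_in Ut st vt.
have hb' : [set v; b] \in cycle_edges t.
  have hne := next_prev_neq Ut st vt.
  have hbN : b \in [set next t v; prev t v].
    have [hnx|hnx] := hn _ (or_introl (next_cycle ct vt)); last by rewrite hnx set21.
    have [hpv|hpv] := hn _ (or_intror (prev_cycle ct vt)); last by rewrite hpv set22.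
    by rewrite hnx hpv eqxx in hne.
  by move: hbN; rewrite -hN inE.
have va : v != a by rewrite eq_sym.
have vb : v != b by rewrite eq_sym.
have E1 := cycle_unique hcact hC1 hD va ha hin.
have E2 := cycle_unique hcact hC2 hD vb hb hb'.
by move: C12; rewrite E1 E2 eqxx.
Qed.

End Main2.

Section Tree.
Variables (T : finType) (r : rel T) (z : T).
Hypothesis r_sym : symmetric r.
Hypothesis r_conn : forall x, connect r x z.
Hypothesis r_acyc : forall u w, r u w ->
  ~~ connect (fun a b => r a b && ([set a; b] != [set u; w])) u w.

Definition Pd x n := [exists t : n.-tuple T, path r x t && (last x t == z)].

Lemma PdP x n : reflect (exists s : seq T, [/\ size s = n, path r x s & last x s = z]) (Pd x n).
Proof.
apply: (iffP existsP) => [[t /andP [h1 /eqP h2]]|[s [hs h1 h2]]].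
  by exists (tval t); rewrite size_tuple.
by subst n; exists (in_tuple s); rewrite h1 h2 eqxx.
Qed.

Lemma Pd_ex x : exists n, Pd x n.
Proof.
have /connectP [p pp hp] := r_conn x; exists (size p); apply/PdP; by exists p.
Qed.

Definition dist x := ex_minn (Pd_ex x).

Lemma dist_P x : Pd x (dist x).
Proof. by rewrite /dist; case: ex_minnP. Qed.

Lemma dist_min x n : Pd x n -> dist x <= n.
Proof. by rewrite /dist; case: ex_minnP => m _ h /h. Qed.

Lemma dist_z : dist z = 0.
Proof. apply/eqP; rewrite -leqn0; apply: dist_min; apply/PdP; by exists [::]. Qed.

Lemma dist0 x : dist x = 0 -> x = z.
Proof. move=> h; have := dist_P x; rewrite h => /PdP [s [hs _ hl]]; by case: s hs hl. Qed.

Lemma dist_edge a b : r a b -> dist a <= (dist b).+1.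
Proof.
move=> rab; have /PdP [s [hs ps ls]] := dist_P b.
apply: dist_min; apply/PdP; exists (b :: s); by rewrite /= rab ps hs ls.
Qed.

Lemma dist_par x : x != z -> exists y, r x y && ((dist y).+1 == dist x).
Proof.
move=> xz; have /PdP [s [hs ps ls]] := dist_P x.
case: s hs ps ls => [|y s] /=; first by move=> _ _ hx; rewrite hx eqxx in xz.
move=> hs /andP [rxy ps] ls; exists y; rewrite rxy /=.
have h1 : dist y <= size s by apply: dist_min; apply/PdP; exists s.
have h2 := dist_edge rxy.
by rewrite eqn_leq h2 andbT -hs ltnS.
Qed.

Definition par x := if [pick y | r x y && ((dist y).+1 == dist x)] is Some y then y else x.

Lemma par_spec x : x != z -> r x (par x) /\ (dist (par x)).+1 = dist x.
Proof.
move=> xz; rewrite /par; case: pickP => [y /andP [h1 /eqP h2] | h] //.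
have [y hy] := dist_par xz; by rewrite h in hy.
Qed.

Definition Dn B a b := r a b && ((dist b).+1 == dist a) && (dist a <= B).

Lemma desc B x : dist x <= B -> connect (Dn B) x z.
Proof.
move: {2}(dist x) (erefl (dist x)) => m; elim: m x => [|m IH] x hx hB.
  by rewrite (dist0 hx) connect0.
have xz : x != z by apply/eqP => hxz; move: hx; rewrite hxz dist_z.
have [h1 h2] := par_spec xz.
apply: (@connect_trans _ _ (par x)); first by apply: connect1; rewrite /Dn h1 h2 eqxx hB.
apply: IH; first by move: h2; rewrite hx => -[].
by apply: leq_trans hB; rewrite -h2.
Qed.

Definition rm u w a b := r a b && ([set a; b] != [set u; w]).

Lemma rm_sym u w : symmetric (rm u w).
Proof. by move=> a b; rewrite /rm r_sym setUC. Qed.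

Lemma Dn_rm B u w a b : B < dist u -> Dn B a b -> rm u w a b.
Proof.
move=> hB /andP [/andP [rab /eqP hab] hb]; rewrite /rm rab /=.
apply/negP => /eqP hs.
have : u \in [set a; b] by rewrite hs set21.
rewrite in_set2 => /orP [] /eqP hu; subst u.
  by move: hB; rewrite ltnNge hb.
by move: hB; rewrite ltnNge (leq_trans _ hb) // -hab.
Qed.

Lemma dist_neq u w : r u w -> dist u != dist w.
Proof.
move=> ruw; apply/negP => /eqP he.
have : connect (rm u w) u w.
  have cu : connect (rm u w) u z.
    apply: connect_sub (desc (leqnn (dist u))) => a b hD; apply: connect1.
    move: hD => /andP [/andP [rab /eqP hab] hb]; rewrite /rm rab /=.
    apply/negP => /eqP /set2_eq [[ha hb']|[ha hb']]; subst a b.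
      by move: hab; rewrite he; lia.
    by move: hab; rewrite he; lia.
  have cw : connect (rm u w) w z.
    apply: connect_sub (desc (leqnn (dist w))) => a b hD; apply: connect1.
    move: hD => /andP [/andP [rab /eqP hab] hb]; rewrite /rm rab /=.
    apply/negP => /eqP /set2_eq [[ha hb']|[ha hb']]; subst a b.
      by move: hab; rewrite he; lia.
    by move: hab; rewrite he; lia.
  apply: connect_trans cu _; by rewrite (sym_connect_sym (@rm_sym u w)).
by move/negP: (r_acyc ruw).
Qed.

Lemma par_uniq u w w' : r u w -> r u w' -> (dist w).+1 = dist u ->
  (dist w').+1 = dist u -> w = w'.
Proof.
move=> ruw ruw' hw hw'; apply/eqP; apply: contraT => ww'.
have : connect (rm u w) u w.
  have c1 : connect (rm u w) w z.
    apply: connect_sub (desc (leqnn (dist w))) => a b hD; apply: connect1.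
    by apply: Dn_rm hD; rewrite -hw.
  have c2 : connect (rm u w) w' z.
    apply: connect_sub (desc (leqnn (dist w'))) => a b hD; apply: connect1.
    by apply: Dn_rm hD; rewrite -hw'.
  have c3 : rm u w u w'.
    rewrite /rm ruw' /=; apply/negP => /eqP /set2_same /(_ erefl) h.
    by rewrite h eqxx in ww'.
  apply: (connect_trans (connect1 c3)); apply: connect_trans c2 _.
  by rewrite (sym_connect_sym (@rm_sym u w)).
by move/negP: (r_acyc ruw).
Qed.

Lemma tree_darts : #|[set p : T * T | r p.1 p.2]| = (#|T|.-1).*2.
Proof.
pose I1 := [set (x, par x) | x in [set~ z]].
pose I2 := [set (par x, x) | x in [set~ z]].
have c1 : #|I1| = #|T|.-1.
  by rewrite card_in_imset ?cardsC1 // => x y _ _ [].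
have c2 : #|I2| = #|T|.-1.
  by rewrite card_in_imset ?cardsC1 // => x y _ _ [].
have dis : I1 :&: I2 = set0.
  apply/setP => p; rewrite !inE; apply/negP => /andP [/imsetP [x hx ->] /imsetP [y hy]].
  case=> hxy hpy; rewrite !inE in hx hy.
  have [_ h1] := par_spec hx; have [_ h2] := par_spec hy.
  move: h1 h2; rewrite hpy -hxy => h1 h2; rewrite -h2 in h1.
  lia.
have -> : [set p : T * T | r p.1 p.2] = I1 :|: I2.
  apply/setP => -[u w]; rewrite !inE /=; apply/idP/orP.
    move=> ruw; have hne := dist_neq ruw.
    have h1 := dist_edge ruw; have h2 := dist_edge (ruw : r u w); rewrite r_sym in ruw.
    have h3 := dist_edge ruw.
    case: (ltngtP (dist u) (dist w)) hne => // hlt _.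
      have wz : w != z by apply/eqP => hw; move: hlt; rewrite hw dist_z.
      have [p1 p2] := par_spec wz.
      right; apply/imsetP; exists w; rewrite ?inE //.
      have -> : par w = u; last by [].
      apply: par_uniq p1 ruw p2 _; apply/eqP; rewrite eqn_leq h3 andbT; exact: hlt.
    have uz : u != z by apply/eqP => hu; move: hlt; rewrite hu dist_z.
    have [p1 p2] := par_spec uz.
    left; apply/imsetP; exists u; rewrite ?inE //.
    have -> : par u = w; last by [].
    rewrite r_sym in ruw.
    apply: par_uniq p1 ruw p2 _; apply/eqP; rewrite eqn_leq h1 andbT; exact: hlt.
  case=> /imsetP [x hx [-> ->]]; rewrite !inE in hx; have [p1 _] := par_spec hx => //.
  by rewrite r_sym.
by rewrite cardsU dis cards0 subn0 c1 c2 addnn.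
Qed.

End Tree.

Section Main3.
Variables (T : finType) (e : rel T).
Hypotheses (e_sym : symmetric e) (e_irr : irreflexive e).
Hypotheses (hcact : cactus e) (hnb : no_bridges e).

Definition cpick (C : {set {set T}}) := [pick p : T * T | [exists m : 'I_#|T|.+1,
  exists t : m.-tuple T, [&& uniq t, 2 < m, cycle e t, C == cycle_edges t,
   p.1 == head p.1 t & p.2 == last p.1 t]]].

Definition fe C := if cpick C is Some p then [set p.1; p.2] else set0.

Lemma fe_spec C : C \in cycles e -> exists h s,
  [/\ uniq (h :: s), 2 < size (h :: s), cycle e (h :: s), C = cycle_edges (h :: s)
   & fe C = [set h; last h s]].
Proof.
move=> hC; rewrite /fe /cpick; case: pickP => [p|].
  move=> /existsP [m /existsP [[ts hs] /and5P [Ut hm ct /eqP hCt /andP [/eqP h1 /eqP h2]]]].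
  rewrite /= in Ut ct hCt h1 h2; rewrite -(eqP hs) in hm.
  case: ts hs Ut hm ct hCt h1 h2 => [|h s] // hs Ut hm ct hCt h1 h2.
  exists h, s; split => //; rewrite h2 h1 //.
move=> hnone; have [t [Ut st ct hCt]] := cycle_wit hC.
case: t Ut st ct hCt => [|h s] // Ut st ct hCt.
have hs : size (h :: s) < #|T|.+1 by rewrite ltnS -(card_uniqP Ut) max_card.
move: (hnone (h, last h s)) => /= /negbT /negP hf; exfalso; apply: hf; apply/existsP; exists (Ordinal hs).
apply/existsP; exists (in_tuple (h :: s)); rewrite (_ : tval (in_tuple (h :: s)) = h :: s) // Ut ct -hCt !eqxx /= andbT; exact: st.
Qed.

Lemma fe_in C : C \in cycles e -> fe C \in C.
Proof.
move=> /fe_spec [h [s [Ut st ct -> ->]]]; apply/mem_cedges.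
exists (last h s); first exact: mem_last.
by rewrite next_last // setUC.
Qed.

Lemma fe_neq C : C \in cycles e -> exists a b, a != b /\ fe C = [set a; b].
Proof.
move=> /fe_spec [h [s [Ut st ct _ ->]]]; exists h, (last h s); split => //.
case: s Ut st {ct} => [|y s] //= /andP [hn _] _; apply: contraNneq hn => ->.
by apply: mem_last.
Qed.

Lemma fe_inj : {in cycles e &, injective fe}.
Proof.
move=> C D hC hD h; have [a [b [ab hab]]] := fe_neq hC.
apply: (cycle_unique hcact hC hD ab); rewrite -hab; [exact: fe_in | rewrite h; exact: fe_in].
Qed.

Definition F := [set fe C | C in cycles e].

Lemma card_F : #|F| = #|cycles e|.
Proof. by rewrite card_in_imset //; apply: fe_inj. Qed.

Definition e' a b := e a b && ([set a; b] \notin F).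

Lemma e'_sym : symmetric e'.
Proof. by move=> a b; rewrite /e' e_sym setUC. Qed.

Lemma F_edge f : f \in F -> exists a b, [/\ a != b, e a b & f = [set a; b]].
Proof.
case/imsetP => C hC ->; have [a [b [ab hab]]] := fe_neq hC.
exists a, b; split => //; apply: (cedge_e e_sym hC); rewrite -hab; exact: fe_in.
Qed.

Lemma F_cycle C x y : C \in cycles e -> x != y -> [set x; y] \in C ->
  [set x; y] \in F -> [set x; y] = fe C.
Proof.
move=> hC xy hin /imsetP [D hD hxy].
have := fe_in hD; rewrite -hxy => hD'.
by rewrite (cycle_unique hcact hC hD xy hin hD').
Qed.

Lemma e'_conn_edge a b : e a b -> connect e' a b.
Proof.
move=> eab; case hF: ([set a; b] \in F); last by apply: connect1; rewrite /e' eab hF.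
case/imsetP: hF => C hC hab.
have [h [s [Ut st ct hCt hfe]]] := fe_spec hC.
suff hp : connect e' h (last h s).
  rewrite hfe in hab; case: (set2_eq hab) => [[-> ->]|[-> ->]] //.
  by rewrite (sym_connect_sym e'_sym).
apply/connectP; exists s => //.
apply/(pathP h) => i hi.
set x := nth h (h :: s) i; set y := nth h s i.
have hx : x \in h :: s by rewrite /x mem_nth // ltnS ltnW.
have hy : y = next (h :: s) x.
  rewrite next_nth hx /x index_uniq //; by rewrite /= ltnS ltnW.
have exy : e x y by rewrite hy; apply: next_cycle.
have xy : x != y by apply: contraTneq exy => ->; rewrite e_irr.
rewrite /e' exy /=; apply/negP => hinF.
have hinC : [set x; y] \in C by rewrite hCt; apply/mem_cedges; exists x; rewrite // hy.
have := F_cycle hC xy hinC hinF; rewrite hfe => /set2_eq [[hxh hyl]|[hxl hyh]].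
  have ss : 1 < size s by move: st.
  have Us : uniq s by case/andP: Ut.
  have i0 : i = 0.
    apply/eqP; rewrite -(nth_uniq h (_ : i < size (h :: s)) (_ : 0 < size (h :: s)) Ut) //.
    - by rewrite -/x hxh.
    - by rewrite /= ltnS ltnW.
  have : nth h s 0 == nth h s (size s).-1 by rewrite nth_last -hyl /y i0.
  rewrite nth_uniq //; [move/eqP; lia | lia | lia].
move: Ut => /= /andP [hns _]; move: hns; rewrite -hyh /y mem_nth //.
Qed.

Lemma e'_conn x y : connect e' x y.
Proof.
have := hcact.1 => /forallP /(_ x) /forallP /(_ y).
by apply: connect_sub => a b /e'_conn_edge.
Qed.

Lemma e'_acyc u w : e' u w ->
  ~~ connect (fun a b => e' a b && ([set a; b] != [set u; w])) u w.
Proof.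
move=> euw; apply/negP => hc.
have se' : subrel e' e by move=> a b /andP [].
have ewu : e' w u by rewrite e'_sym.
have hc' : connect (fun a b => e' a b && ([set a; b] != [set w; u])) u w.
  rewrite -(@eq_connect _ (fun a b => e' a b && ([set a; b] != [set u; w]))) //.
  by move=> a b; rewrite [[set w; u]]setUC.
have [t [Ut st ct hin]] := mk_cycle e_irr se' ewu hc'.
have hD : cycle_edges t \in cycles e by apply: cycle_of => //; apply: sub_cycle ct.
have := fe_in hD => /mem_cedges [x xt hx].
have := next_cycle ct xt; rewrite /e' -hx => /andP [_].
by rewrite imset_f.
Qed.

End Main3.

Section Count.
Variable T : finType.

Lemma darts_sum (r : rel T) : #|[set p : T * T | r p.1 p.2]| = \sum_x #|[set y | r x y]|.
Proof.
rewrite -sum1dep_card.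
transitivity (\sum_(x | true) \sum_(y | r x y) 1); last first.
  by apply: eq_bigr => x _; rewrite sum1dep_card.
by rewrite pair_big_dep.
Qed.

Lemma card_pairs (F : {set {set T}}) :
  (forall f, f \in F -> exists a b, a != b /\ f = [set a; b]) ->
  #|[set p : T * T | [set p.1; p.2] \in F]| = (#|F|).*2.
Proof.
move=> hF; rewrite -sum1_card (partition_big (fun p : T * T => [set p.1; p.2]) (mem F)); last first.
  by move=> p; rewrite inE.
rewrite -[in RHS]sum1_card -muln2 big_distrl /=.
apply: eq_bigr => f hf; rewrite mul1n.
have [a [b [ab hfab]]] := hF f hf; subst f.
rewrite sum1dep_card.
have -> : [set p : T * T | (p \in [set p0 : T * T | [set p0.1; p0.2] \in F]) &&
      ([set p.1; p.2] == [set a; b])] = [set (a, b); (b, a)].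
  apply/setP => -[x y]; rewrite !inE /=; apply/idP/idP.
    case/andP => _ /eqP /set2_eq [[-> ->]|[-> ->]]; by rewrite eqxx ?orbT.
  by case/orP => /eqP [-> ->]; rewrite ?[[set b; a]]setUC eqxx andbT.
rewrite cards2; case: eqP => // -[h _]; by rewrite h eqxx in ab.
Qed.

End Count.

Section Main5.
Variables (T : finType) (e : rel T).
Hypotheses (e_sym : symmetric e) (e_irr : irreflexive e).
Hypotheses (hcact : cactus e) (hnb : no_bridges e).
Hypotheses (hT : 1 < #|T|) (hch : chemical e).

Lemma sum_deg : \sum_x deg e x = (#|T| + #|[set x | deg e x == 4]|).*2.
Proof.
transitivity (\sum_x (2 + (deg e x == 4) * 2)).
  apply: eq_bigr => x _; by case: (deg24 e_sym e_irr hcact hnb x hch hT) => ->.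
have h4 : \sum_x ((deg e x == 4) : nat) = #|[set x | deg e x == 4]|.
  rewrite -sum1dep_card [RHS]big_mkcond /=; apply: eq_bigr => x _; by case: ifP.
rewrite big_split /= sum_nat_const -big_distrl /= h4 -!muln2 mulnDl; congr (_ + _); apply: eq_card => x.
Qed.

Lemma cycles_count : #|cycles e| = #|[set x | deg e x == 4]| + 1.
Proof.
have /card_gt0P [z _] : 0 < #|T| by apply: ltnW.
have t1 := @tree_darts T (e' e) z (e'_sym e_sym) (fun x => e'_conn e_sym e_irr hcact x z)
  (fun u w => @e'_acyc _ _ e_sym e_irr u w).
have hsplit : [set p : T * T | e p.1 p.2] =
    [set p : T * T | e' e p.1 p.2] :|: [set p : T * T | [set p.1; p.2] \in F e].
  apply/setP => -[a b]; rewrite !inE /= /e'; apply/idP/idP.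
    by move=> ->; case: ([set a; b] \in F e).
  case/orP => [/andP [] //| hf].
  have [x [y [_ exy hxy]]] := F_edge e_sym hf.
  by case: (set2_eq hxy) => [[-> ->]|[-> ->]]; rewrite // e_sym.
have hdis : [set p : T * T | e' e p.1 p.2] :&: [set p : T * T | [set p.1; p.2] \in F e] = set0.
  apply/setP => -[a b]; rewrite !inE /= /e'; by case: ([set a; b] \in F e); rewrite ?andbF.
have hF2 : forall f, f \in F e -> exists a b, a != b /\ f = [set a; b].
  by move=> f /(F_edge e_sym) [a [b [ab _ ->]]]; exists a, b.
have hc := card_pairs hF2.
have hk := card_F hcact.
have hd := darts_sum e; rewrite hsplit cardsU hdis cards0 subn0 t1 hc hk in hd.
have := sum_deg; rewrite /deg -hd => h; lia.
Qed.

End Main5.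

From mathcomp Require Import ring lra.
Import Order.TTheory GRing.Theory Num.Theory.
Local Open Scope ring_scope.

Section Real.
Variable R : rcfType.

Definition cst : R := (3%:R / 2%:R - Num.sqrt 2%:R) / 4%:R.

Definition Anat (a b : nat) : nat := ((a == 4)%N && (b == 2)%N).

Lemma s2_prop : Num.sqrt (2%:R : R) ^+ 2 = 2%:R /\ 0 < Num.sqrt (2%:R : R).
Proof. by rewrite sqr_sqrtr ?ler0n // sqrtr_gt0 ltr0n. Qed.

Lemma dart_id (a b : nat) : (a = 2 \/ a = 4)%N -> (b = 2 \/ b = 4)%N ->
  (Num.sqrt (a%:R * b%:R))^-1 = (2%:R * a%:R)^-1 + (2%:R * b%:R)^-1
     - cst * ((Anat a b)%:R + (Anat b a)%:R) :> R.
Proof.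
have [h2 hp] := s2_prop.
have s4 : Num.sqrt (4%:R : R) = 2%:R.
  by rewrite (_ : 4%:R = 2%:R ^+ 2) ?sqrtr_sqr ?ger0_norm ?ler0n // -natrX.
have s16 : Num.sqrt (16%:R : R) = 4%:R.
  by rewrite (_ : 16%:R = 4%:R ^+ 2) ?sqrtr_sqr ?ger0_norm ?ler0n // -natrX.
have s8 : Num.sqrt (8%:R : R) = 2%:R * Num.sqrt 2%:R.
  by rewrite (_ : 8%:R = 4%:R * 2%:R) ?sqrtrM ?s4 ?ler0n // -natrM.
set s := Num.sqrt (2%:R : R) in h2 hp s8 *.
have sn0 : s != 0 by rewrite gt_eqF.
have si : s^-1 = s / 2%:R.
  apply: (mulfI sn0); rewrite mulfV // mulrA -expr2 h2 mulfV //.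
  by rewrite pnatr_eq0.
rewrite /cst /Anat -/s.
case=> ->; case=> -> /=; rewrite -natrM /= ?s4 ?s16 ?s8.
- by field.
- by rewrite invfM si; field.
- by rewrite invfM si; field.
- by field.
Qed.

End Real.

Section Final.
Variables (R : rcfType) (T : finType) (e : rel T).
Hypotheses (e_sym : symmetric e) (e_irr : irreflexive e).
Hypotheses (hcact : cactus e) (hnb : no_bridges e).
Hypotheses (hT : (1 < #|T|)%N) (hch : chemical e).

Lemma exch (G : T -> T -> R) :
  \sum_u \sum_(v | e u v) G u v = \sum_u \sum_(v | e u v) G v u.
Proof.
rewrite (exchange_big_dep xpredT) //=; apply: eq_bigr => u _.
by apply: eq_bigl => v; rewrite e_sym.
Qed.

Lemma sum_const_card (P : pred T) (c : R) :
  \sum_(v | P v) c = c * (#|[set v | P v]|)%:R.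
Proof. by rewrite -sum1dep_card natr_sum mulr_sumr; apply: eq_bigr => ? _; rewrite mulr1. Qed.

Definition X : nat := (\sum_u \sum_(v | e u v) Anat (deg e u) (deg e v))%N.

Lemma randic_eq : randic e R = (#|T|)%:R / 2%:R - cst R * X%:R.
Proof.
have h24 := fun u => deg24 e_sym e_irr hcact hnb u hch hT.
rewrite /randic.
rewrite (eq_bigr (fun u => \sum_(v | e u v) ((2%:R * (deg e u)%:R)^-1 + (2%:R * (deg e v)%:R)^-1
   - cst R * ((Anat (deg e u) (deg e v))%:R + (Anat (deg e v) (deg e u))%:R)))); last first.
  by move=> u _; apply: eq_bigr => v _; rewrite dart_id.
have S1 : \sum_u \sum_(v | e u v) (2%:R * (deg e u)%:R)^-1 = (#|T|)%:R / 2%:R :> R.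
  transitivity (\sum_(u : T | true) (2%:R^-1 : R)).
    apply: eq_bigr => u _; rewrite sum_const_card -/(deg e u).
    have : (deg e u)%:R != 0 :> R by case: (h24 u) => ->; rewrite pnatr_eq0.
    move=> hn0; rewrite invfM -mulrA mulVf // mulr1 //.
  rewrite sum_const_card mulrC; congr (_ * _); congr (_%:R).
  by rewrite -cardsT; apply: eq_card => v; rewrite !inE.
have S2 : \sum_u \sum_(v | e u v) (2%:R * (deg e v)%:R)^-1 = (#|T|)%:R / 2%:R :> R.
  by rewrite -(exch (fun a b => (2%:R * (deg e a)%:R)^-1)) S1.
have S3 : \sum_u \sum_(v | e u v) ((Anat (deg e u) (deg e v))%:R : R) = X%:R.
  by rewrite /X natr_sum; apply: eq_bigr => u _; rewrite natr_sum.
have S4 : \sum_u \sum_(v | e u v) ((Anat (deg e v) (deg e u))%:R : R) = X%:R.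
  by rewrite -(exch (fun a b => ((Anat (deg e a) (deg e b))%:R : R))) S3.
under eq_bigr => u _ do rewrite sumrB big_split /= -mulr_sumr big_split /=.
rewrite sumrB big_split /= -mulr_sumr big_split /= S1 S2 S3 S4.
by field.
Qed.


Definition n4 : nat := #|[set x | deg e x == 4%N]|.

Lemma sum4 : (\sum_u \sum_(v | e u v) ((deg e u == 4%N) : nat) = 4 * n4)%N.
Proof.
have h24 := fun u => deg24 e_sym e_irr hcact hnb u hch hT.
transitivity (\sum_u ((deg e u == 4%N) : nat) * 4)%N.
  apply: eq_bigr => u _; rewrite sum_nat_cond_const -/(deg e u).
  by case: (h24 u) => ->.
rewrite -big_distrl /= mulnC /n4 -sum1dep_card [in RHS]big_mkcond /=.
by congr (_ * _)%N; apply: eq_bigr => x _; case: ifP.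
Qed.

Lemma X_le : (X <= 4 * n4)%N.
Proof.
rewrite -sum4; apply: leq_sum => u _; apply: leq_sum => v _.
rewrite /Anat. case: (deg e u == 4)%N; case: (deg e v == 2)%N. all: lia.
Qed.

Lemma X_eq : (forall u v, e u v -> deg e u = 4%N -> deg e v = 2%N) -> X = (4 * n4)%N.
Proof.
move=> H; rewrite -sum4; apply: eq_bigr => u _; apply: eq_bigr => v evu.
rewrite /Anat; case: eqP => // /(H _ _ evu) ->; by [].
Qed.

End Final.

Lemma cst_ge0 (R : rcfType) : 0 <= cst R.
Proof.
have [h2 hp] := s2_prop R; rewrite /cst.
set s := Num.sqrt (2%:R : R) in h2 hp *.
have : s <= 3%:R / 2%:R by nra.
move=> h; apply: divr_ge0; last by rewrite ler0n.
by rewrite subr_ge0.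
Qed.

Unset Implicit Arguments.

Theorem corollary4p5 (R : rcfType) (T : finType) (e : rel T)
  (e_sym : symmetric e) (e_irr : irreflexive e)
  (n k : nat) (hn : #|T| = n) (hk : #|cycles e| = k) (hn2 : (2 <= n)%N)
  (hchem : chemical e) (hcact : cactus e) (hnb : no_bridges e) :
  n%:R / 2%:R - (k%:R - 1) * (3%:R / 2%:R - Num.sqrt 2%:R) <= randic e R /\
  ((forall u v, e u v -> ~~ (articulation e u && articulation e v)) ->
   randic e R = n%:R / 2%:R - (k%:R - 1) * (3%:R / 2%:R - Num.sqrt 2%:R)).
Proof.
have hT : (1 < #|T|)%N by rewrite hn.
have hk' := cycles_count e_sym e_irr hcact hnb hT hchem.
subst k n.
have hc : (#|[set x | deg e x == 4%N]| + 1)%:R - 1 = (n4 e)%:R :> R.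
  by rewrite natrD addrK.
have hcst : 3%:R / 2%:R - Num.sqrt 2%:R = 4%:R * cst R :> R.
  by rewrite /cst; field.
rewrite randic_eq // hk' hc hcst; split.
  rewrite lerD2l lerN2.
  have -> : (n4 e)%:R * (4%:R * cst R) = cst R * ((4 * n4 e)%N)%:R :> R.
    by rewrite natrM; ring.
  apply: ler_wpM2l; first exact: cst_ge0.
  by rewrite ler_nat X_le.
move=> H; rewrite (X_eq e_sym e_irr hcact hnb hT hchem); first by rewrite natrM; ring.
move=> u v euv hu.
case: (deg24 e_sym e_irr hcact hnb v hchem hT) => // hv.
have := H u v euv; rewrite (art4 e_sym e_irr hcact hnb hu) (art4 e_sym e_irr hcact hnb hv).
by [].
Qed.
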